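(* Let $\mu$ be a joint distribution of a triple $(X,A,Y)$ with $X\in\mathcal{X}\subseteq\mathbb{R}^d$, $A\in\{0,1\}$ with $\Pr(A=0),\Pr(A=1)>0$, and $Y\in[-1,1]$. Let $\rho\ge0$ and let $h:\mathcal{X}\to\mathbb{R}$ satisfy $|h(x)-h(x')|\le\rho\|x-x'\|$ for all $x,x'\in\mathcal{X}$ ($\rho$-individual fairness), and let $\widehat{Y}=h(X)$. Then $$|\varepsilon_{1,\mu_0}(\widehat{Y})-\varepsilon_{1,\mu_1}(\widehat{Y})|\le\sqrt{\rho^2+1}\cdot W_1(\mu_0,\mu_1).$$
   Context: $\|\cdot\|$ is the Euclidean norm. For $a\in\{0,1\}$, $\mu_a$ is the conditional distribution of $(X,Y)$ given $A=a$, viewed as a distribution on $\mathbb{R}^{d+1}$. $\varepsilon_{1,\nu}(\widehat{Y}):=\mathbb{E}_\nu[|\widehat{Y}-Y|]$. $W_1(\mu_0,\mu_1)=\inf_\gamma\int\|(x,y)-(x',y')\|\,d\gamma$ over couplings $\gamma$ of $\mu_0,\mu_1$, with Euclidean norm on $\mathbb{R}^{d+1}$. *)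

(* Defs.v *)
From HB Require Import structures.
From mathcomp Require Import all_boot all_order all_algebra.
From mathcomp Require Import all_classical all_reals all_analysis.
Set Implicit Arguments. Unset Strict Implicit. Unset Printing Implicit Defensive.
Import Order.TTheory GRing.Theory Num.Theory.
Import numFieldNormedType.Exports.
Local Open Scope classical_set_scope.
Local Open Scope ring_scope.

Definition Rvec (R : realType) (n : nat) :=
  g_sigma_algebraType (@open 'rV[R]_n).

Definition eucl_dist (R : realType) (n : nat) (x x' : 'rV[R]_n) : R :=
  Num.sqrt (\sum_(i < n) (x 0 i - x' 0 i) ^+ 2).

Definition eucl_dist1 (R : realType) (d : nat)
    (p q : (Rvec R d * R)%type) : R :=
  Num.sqrt (\sum_(i < d) (p.1 0 i - q.1 0 i) ^+ 2 + (p.2 - q.2) ^+ 2).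

(* The joint law of (X, A, Y) lives on (R^d * bool) * R; z = ((x, a), y).
   A = 0 is encoded by false, A = 1 by true. *)
Definition jointT (R : realType) (d : nat) := ((Rvec R d * bool) * R)%type.

Definition evA (R : realType) (d : nat) (a : bool) : set (jointT R d) :=
  [set z | z.1.2 = a].

Definition pXY (R : realType) (d : nat) (z : jointT R d) : (Rvec R d * R)%type :=
  (z.1.1, z.2).

Definition cond_law (R : realType) (d : nat) (mu : probability (jointT R d) R)
    (a : bool) (B : set (Rvec R d * R)%type) : \bar R :=
  (mu (@evA R d a `&` (@pXY R d) @^-1` B) * ((fine (mu (@evA R d a)))^-1)%:E)%E.

Definition coupling (R : realType) (d : nat) (mu : probability (jointT R d) R)
    (g : probability ((Rvec R d * R) * (Rvec R d * R))%type R) : Prop :=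
  forall B : set (Rvec R d * R)%type, measurable B ->
    g (B `*` setT) = cond_law mu false B /\ g (setT `*` B) = cond_law mu true B.

Definition W1 (R : realType) (d : nat) (mu : probability (jointT R d) R) : \bar R :=
  ereal_inf [set (\int[g]_p (eucl_dist1 p.1 p.2)%:E)%E | g in coupling mu].

(* eps_{1, mu_a}(h(X)) = E_{mu_a}[ |h(X) - Y| ] = E[|h(X) - Y| 1{A=a}] / P(A = a);
   the integral is taken over the (full-measure, measurable) event {X \in Xs}. *)
Definition eps1 (R : realType) (d : nat) (mu : probability (jointT R d) R)
    (Xs : set 'rV[R]_d) (h : 'rV[R]_d -> R) (a : bool) : \bar R :=
  ((\int[mu]_(z in @evA R d a `&` [set z | Xs z.1.1]) (`|h z.1.1 - z.2|)%:E)
     * ((fine (mu (@evA R d a)))^-1)%:E)%E.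

(* Main.v *)
Require Import Defs.
From HB Require Import structures.
From mathcomp Require Import all_boot all_order all_algebra.
From mathcomp Require Import all_classical all_reals all_analysis.
From mathcomp Require Import measurable_realfun.
From mathcomp Require Import ring lra.
Import Order.TTheory GRing.Theory Num.Theory.
Import numFieldNormedType.Exports.
Local Open Scope classical_set_scope.
Local Open Scope ring_scope.
Lemma rvec_meas (R : realType) n (D : set 'rV[R]_n) (f : 'rV[R]_n -> R) :
  measurable (D : set (Rvec R n)) -> {within D, continuous f} ->
  measurable_fun (D : set (Rvec R n)) (f : Rvec R n -> R).
Proof.
move=> mD /continuousP cf.
apply: (measurability _ (measurable_realfun.RGenOpens.measurableE R)).
move=> _ [_ [a [b ->] <-]].
have /open_subspaceP[V oV VD] := cf _ (@interval_open R (BRight a) (BLeft b) isT isT).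
rewrite setIC -VD; apply: measurableI => //.
exact: sub_sigma_algebra.
Qed.
Lemma eucl_small (R : realType) n (x y : 'rV[R]_n) (r : R) : 0 <= r ->
  (forall i, `|x 0 i - y 0 i| <= r) -> eucl_dist x y <= n.+1%:R * r.
Proof.
move=> r0 H; rewrite /eucl_dist.
have -> : n.+1%:R * r = Num.sqrt ((n.+1%:R * r) ^+ 2).
  by rewrite sqrtr_sqr ger0_norm // mulr_ge0.
rewrite ler_sqrt; last by rewrite sqr_ge0.
apply: (@le_trans _ _ (\sum_(i < n) r ^+ 2)).
  apply: ler_sum => i _; rewrite -real_normK ?num_real //.
  by rewrite lerXn2r ?nnegrE.
rewrite sumr_const card_ord exprMn -[_ *+ n]mulr_natr mulrC.
apply: ler_wpM2r; first exact: sqr_ge0.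
rewrite -natrX ler_nat expnS; exact: leq_trans (leqnSn n) (leq_pmulr _ _).
Qed.

Lemma lip_cont (R : realType) n (D : set 'rV[R]_n) (f : 'rV[R]_n -> R) (rho : R) :
  0 <= rho ->
  (forall x x', D x -> D x' -> `|f x - f x'| <= rho * eucl_dist x x') ->
  {within D, continuous f}.
Proof.
move=> rho0 Hl; apply/subspace_continuousP => x Dx.
apply/cvgrPdist_lt => e e0.
have rp : 0 < rho + 1 by rewrite ltr_wpDl.
pose r := e / (rho + 1) / n.+1%:R.
have r0 : 0 < r by rewrite /r !divr_gt0.
rewrite near_withinE; near=> y => Dy; rewrite /from_subspace.
have H : forall i, `|x 0 i - y 0 i| <= r.
  move=> i; apply/ltW.
  have : ball x r y.
  near: y. exact: (@nbhsx_ballx _ _ x r r0).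
  by move=> [_ /(_ 0 i)].
apply: (le_lt_trans (Hl _ _ Dx Dy)).
apply: (@le_lt_trans _ _ (rho * (e / (rho + 1)))).
  apply: ler_wpM2l => //.
  apply: (le_trans (@eucl_small _ _ x y r (ltW r0) H)).
  by rewrite /r mulrC divfK // pnatr_eq0.
rewrite mulrA ltr_pdivrMr // mulrC ltr_pM2l // ltrDl //.
Unshelve. all: by end_near.
Qed.
Section transfer.
Local Open Scope ereal_scope.
Context d1 d2 d3 (X1 : measurableType d1) (X2 : measurableType d2)
  (Y : measurableType d3) (R : realType).
Import HBNNSimple.

Let int_simple dX (X : measurableType dX) (m : measure X R) (phi : X -> Y) (mphi : measurable_fun setT phi)
  (D : set X) (mD : measurable D) (h : {nnsfun Y >-> R}) :
  \int[m]_(x in D) (h (phi x))%:E =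
  \sum_(r \in range h) r%:E * m (phi @^-1` (h @^-1` [set r]) `&` D).
Proof.
have mpre r : measurable (phi @^-1` (h @^-1` [set r])).
  by rewrite -[X in measurable X]setTI; apply: mphi.
under eq_integral do rewrite fimfunE -fsumEFin//.
rewrite ge0_integral_fsum//; last 2 first.
  - move=> r; apply/measurable_EFinP/measurable_funM => //.
    by apply/measurable_funTS/measurableT_comp => //.
  - by move=> r x _; rewrite EFinM nnfun_muleindic_ge0.
apply: eq_fsbigr => r _.
have -> : (fun x => (r * \1_(h @^-1` [set r]) (phi x))%:E) =
          (fun x => (r * \1_(phi @^-1` (h @^-1` [set r])) x)%:E).
  by apply/funext => x; rewrite !indicE.
rewrite (@integralZl_indic _ _ _ _ _ mD (fun r => phi @^-1` (h @^-1` [set r])))//.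
- by rewrite integral_indic.
- move=> r0; apply/seteqP; split => // x /= hx.
  by move: r0; rewrite -hx ltNge => /negP; apply; exact: fun_ge0.
Qed.

Lemma transfer (m1 : measure X1 R) (m2 : measure X2 R)
  (phi1 : X1 -> Y) (phi2 : X2 -> Y) (mphi1 : measurable_fun setT phi1)
  (mphi2 : measurable_fun setT phi2) (D1 : set X1) (D2 : set X2)
  (mD1 : measurable D1) (mD2 : measurable D2) :
  (forall B, measurable B -> m1 (phi1 @^-1` B `&` D1) = m2 (phi2 @^-1` B `&` D2)) ->
  forall G : Y -> \bar R, measurable_fun setT G -> (forall y, 0 <= G y) ->
  \int[m1]_(x in D1) G (phi1 x) = \int[m2]_(x in D2) G (phi2 x).
Proof.
move=> H G mG G0; pose G_ := nnsfun_approx measurableT mG.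
have lim_eq (dX : measure_display) (X : measurableType dX) (m : measure X R) (phi : X -> Y) (mphi : measurable_fun setT phi) (D : set X) (mD : measurable D) :
    \int[m]_(x in D) G (phi x) = limn (fun n => \int[m]_(x in D) (G_ n (phi x))%:E).
  rewrite -monotone_convergence//=.
  - apply: eq_integral => x /[!inE] xD; apply/esym/cvg_lim => //.
    exact: cvg_nnsfun_approx.
  - move=> n; apply/measurable_EFinP.
    by apply/measurable_funTS/measurableT_comp => //.
  - by move=> n x _; rewrite lee_fin.
  - by move=> x _ a b ab; rewrite lee_fin//; exact/lefP/nd_nnsfun_approx.
rewrite (lim_eq _ _ m1 _ mphi1 _ mD1) (lim_eq _ _ m2 _ mphi2 _ mD2).
congr (limn _); apply/funext => n; rewrite !int_simple//.
by apply: eq_fsbigr => r _; rewrite H//; exact: measurable_sfunP.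
Qed.
End transfer.

Lemma cs_ineq (R : realType) (rho e u : R) : 0 <= rho -> 0 <= e -> 0 <= u ->
  rho * e + u <= Num.sqrt (rho ^+ 2 + 1) * Num.sqrt (e ^+ 2 + u ^+ 2).
Proof.
move=> r0 e0 u0.
rewrite -sqrtrM ?addr_ge0 ?sqr_ge0 //.
rewrite -[leLHS]ger0_norm ?addr_ge0 ?mulr_ge0 // -sqrtr_sqr ler_sqrt;
  last by rewrite mulr_ge0 ?addr_ge0 ?sqr_ge0.
have : 0 <= (rho * u - e) ^+ 2 by exact: sqr_ge0.
move=> H; nra.
Qed.

Lemma pw (R : realType) d (Xs : set 'rV[R]_d) (h : 'rV[R]_d -> R) (rho : R) x x' (y y' : R) :
  0 <= rho ->
  (forall x x', Xs x -> Xs x' -> `|h x - h x'| <= rho * eucl_dist x x') ->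
  Xs x -> Xs x' ->
  `| `|h x - y| - `|h x' - y'| | <= Num.sqrt (rho ^+ 2 + 1) * @eucl_dist1 R d (x, y) (x', y').
Proof.
move=> r0 hl Xx Xx'.
have e0 : 0 <= eucl_dist x x' by exact: sqrtr_ge0.
apply: (le_trans (ler_dist_dist _ _)).
have -> : h x - y - (h x' - y') = (h x - h x') - (y - y') by ring.
apply: (le_trans (ler_normB _ _)).
apply: (@le_trans _ _ (rho * eucl_dist x x' + `|y - y'|)).
  by rewrite lerD2r hl.
apply: (le_trans (cs_ineq _ _ _ _ r0 e0 (normr_ge0 _))).
rewrite /eucl_dist1 /= sqr_sqrtr ?sumr_ge0 // => [|i _]; last exact: sqr_ge0.
by rewrite real_normK ?num_real.
Qed.

Lemma mdist (R : realType) d :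
  measurable_fun setT (fun p : ((Rvec R d * R) * (Rvec R d * R))%type => eucl_dist1 p.1 p.2).
Proof.
have mc (i : 'I_d) : measurable_fun setT (fun x : Rvec R d => x 0 i).
  apply: (rvec_meas _ _ _ _ measurableT).
  exact/continuous_subspaceT/coord_continuous.
apply: measurableT_comp.
  by apply: continuous_measurable_fun; exact: sqrt_continuous.
apply: measurable_funD.
  apply: measurable_sum => i; apply: measurable_funX; apply: measurable_funB.
    exact: measurableT_comp (mc i) (measurableT_comp measurable_fst measurable_fst).
  exact: measurableT_comp (mc i) (measurableT_comp measurable_fst measurable_snd).
apply: measurable_funX; apply: measurable_funB.
  exact: measurableT_comp measurable_snd measurable_fst.
exact: measurableT_comp measurable_snd measurable_snd.
Qed.

Theorem proposition3 (R : realType) (d : nat)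
    (mu : probability (jointT R d) R)
    (Xs : set 'rV[R]_d) (h : 'rV[R]_d -> R) (rho : R) :
  measurable (Xs : set (Rvec R d)) ->
  {ae mu, forall z : jointT R d, Xs z.1.1} ->
  (0 < mu (@evA R d false))%E -> (0 < mu (@evA R d true))%E ->
  {ae mu, forall z : jointT R d, -1 <= z.2 <= 1} ->
  0 <= rho ->
  (forall x x', Xs x -> Xs x' -> `|h x - h x'| <= rho * eucl_dist x x') ->
  (eps1 mu Xs h false < +oo)%E -> (eps1 mu Xs h true < +oo)%E ->
  (`|eps1 mu Xs h false - eps1 mu Xs h true|
     <= (Num.sqrt (rho ^+ 2 + 1))%:E * W1 mu)%E.
Proof.
move=> mXs aeX mu0 mu1 _ rho0 hlip eps0 eps1f.
have mfst1 : measurable_fun setT (fun z : jointT R d => z.1.1).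
  exact: measurableT_comp measurable_fst measurable_fst.
have mevA a : measurable (@evA R d a).
  have mA : measurable_fun setT (fun z : jointT R d => z.1.2).
    exact: measurableT_comp measurable_snd measurable_fst.
  by have := mA measurableT [set a]; rewrite setTI; apply.
have mpXY : measurable_fun setT (@pXY R d).
  exact: measurable_fun_pair (measurableT_comp measurable_fst measurable_fst) measurable_snd.
pose F := (fun p : (Rvec R d * R)%type => `|h p.1 - p.2|) \_ ((Xs : set (Rvec R d)) `*` setT).
have mXsT : measurable ((Xs : set (Rvec R d)) `*` @setT R) by apply: measurableX.
have mF : measurable_fun setT F.
  apply/(measurable_restrictT _ _).1 => //.
  apply: measurableT_comp => //; apply: measurable_funB; last first.
    exact: measurable_funTS measurable_snd.
  apply: (@measurable_comp _ _ _ _ _ _ (Xs : set (Rvec R d))) => //.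
  - by move=> _ [[x y] [Xx _] <-].
  - exact: (rvec_meas _ _ _ _ mXs (lip_cont _ _ _ _ _ rho0 hlip)).
  - exact: measurable_funTS measurable_fst.
pose c a := (fine (mu (@evA R d a)))^-1.
have c_gt0 a : 0 < c a.
  rewrite /c invr_gt0 fine_gt0 //; apply/andP; split.
    by case: a; [exact: mu1|exact: mu0].
  by rewrite (le_lt_trans (probability_le1 _ (mevA a))) // ltry.
have F0 p : 0 <= F p by rewrite /F /patch; case: ifPn.
have mFp : measurable_fun setT (fun z => (F (pXY z))%:E).
  by apply/measurable_EFinP; exact: measurableT_comp mF mpXY.
have epsE a : eps1 mu Xs h a = (\int[mu]_(z in evA a) (F (pXY z))%:E * (c a)%:E)%E.
  rewrite /eps1 integral_mkcondr; congr (_ * _)%E; apply: eq_integral => z _.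
  rewrite /patch /F /pXY /=.
  have [Xz|Xz] := pselect (Xs z.1.1).
    rewrite ifT; last exact/mem_set.
    by rewrite /patch ifT //; apply/mem_set.
  rewrite ifF; last exact: memNset.
  by rewrite /patch ifF //; apply: memNset => -[].
have gen (g : probability ((Rvec R d * R) * (Rvec R d * R))%type R) a (phi : ((Rvec R d * R) * (Rvec R d * R))%type -> (Rvec R d * R)%type) : measurable_fun setT phi ->
    (forall B, measurable B -> g (phi @^-1` B) = cond_law mu a B) ->
    (\int[g]_p (F (phi p))%:E = \int[mu]_(z in evA a) (F (pXY z))%:E * (c a)%:E)%E.
  move=> mphi Hg.
  have c0 : 0 <= c a by exact: ltW.
  rewrite muleC -[(c a)%:E]/((NngNum c0)%:num%:E) -ge0_integral_mscale //; last 2 first.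
    exact: measurable_funTS.
    by move=> x _; rewrite lee_fin.
  apply: (@transfer _ _ _ _ _ _ _ g _ phi (@pXY R d) mphi mpXY setT (evA a)
    measurableT (mevA a) _ (fun y => (F y)%:E)).
  - move=> B mB; rewrite setIT; transitivity (cond_law mu a B); first exact: Hg.
    by rewrite /cond_law /mscale /= setIC muleC.
  - exact/measurable_EFinP.
  - by move=> y /=; rewrite lee_fin.
have cpl g (cg : coupling mu g) :
    (\int[g]_p (F p.1)%:E = eps1 mu Xs h false /\
     \int[g]_p (F p.2)%:E = eps1 mu Xs h true)%E.
  split; rewrite epsE; apply: gen.
  - exact: measurable_fst.
  - move=> B mB; rewrite (_ : fst @^-1` B = B `*` setT); first exact: (cg B mB).1.
    by apply/seteqP; split => -[x y] /=; [move=> ?; split | case].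
  - exact: measurable_snd.
  - move=> B mB; rewrite (_ : snd @^-1` B = setT `*` B); first exact: (cg B mB).2.
    by apply/seteqP; split => -[x y] /=; [move=> ?; split | case].
have cnull a : cond_law mu a ((~` (Xs : set (Rvec R d))) `*` setT) = 0%E.
  rewrite /cond_law; case: aeX => N [mN [muN sub]].
  rewrite (@subset_measure0 _ _ _ mu _ N) ?mul0e //.
    apply: measurableI => //; rewrite -[X in measurable X]setTI; apply: mpXY => //.
    by apply: measurableX => //; exact: measurableC.
  by move=> z [_ [/= nX _]]; apply: sub.
have aeg g (cg : coupling mu g) : {ae g, forall p : ((Rvec R d * R) * (Rvec R d * R))%type, Xs p.1.1 /\ Xs p.2.1}.
  have mB : measurable ((~` (Xs : set (Rvec R d))) `*` @setT R).
    by apply: measurableX => //; exact: measurableC.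
  exists (((~` (Xs : set (Rvec R d))) `*` @setT R) `*` setT `|`
          setT `*` ((~` (Xs : set (Rvec R d))) `*` @setT R)); split.
  - by apply: measurableU; apply: measurableX.
  - have e1 : g (((~` (Xs : set (Rvec R d))) `*` @setT R) `*` setT) = 0%E.
      by rewrite -(cnull false); exact: (cg _ mB).1.
    have e2 : g (setT `*` ((~` (Xs : set (Rvec R d))) `*` @setT R)) = 0%E.
      by rewrite -(cnull true); exact: (cg _ mB).2.
    apply/eqP; rewrite eq_le measure_ge0 andbT.
    apply: le_trans (measureU2 _ _ _) _; try by apply: measurableX.
    have H (a b : \bar R) : a = 0%E -> b = 0%E -> (a + b <= 0)%E.
      by move=> -> ->; rewrite adde0.
    by apply: H; [exact: e1|exact: e2].
  - move=> [[x y] [x' y']] /= /not_andP [] H; [left|right]; by split.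
pose L := Num.sqrt (rho ^+ 2 + 1).
have L0 : 0 < L by rewrite sqrtr_gt0 ltr_wpDl // sqr_ge0.
have mF1 : measurable_fun setT (fun p : ((Rvec R d * R) * (Rvec R d * R))%type => F p.1).
  exact: measurableT_comp mF measurable_fst.
have mF2 : measurable_fun setT (fun p : ((Rvec R d * R) * (Rvec R d * R))%type => F p.2).
  exact: measurableT_comp mF measurable_snd.
have key g (cg : coupling mu g) : (`|eps1 mu Xs h false - eps1 mu Xs h true|
    <= L%:E * \int[g]_p (eucl_dist1 p.1 p.2)%:E)%E.
  have [I1 I2] := cpl g cg.
  have int1 : g.-integrable setT (EFin \o (fun p => F p.1)).
    apply/integrableP; split; first exact/measurable_EFinP.
    rewrite (eq_integral (fun p => (F p.1)%:E)); last first.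
      by move=> p _ /=; rewrite ger0_norm.
    by rewrite I1.
  have int2 : g.-integrable setT (EFin \o (fun p => F p.2)).
    apply/integrableP; split; first exact/measurable_EFinP.
    rewrite (eq_integral (fun p => (F p.2)%:E)); last first.
      by move=> p _ /=; rewrite ger0_norm.
    by rewrite I2.
  rewrite -I1 -I2 -integralB_EFin //.
  have mB : measurable_fun setT (fun p : ((Rvec R d * R) * (Rvec R d * R))%type =>
      ((F p.1)%:E - (F p.2)%:E)%E).
    rewrite (_ : (fun p => _) = EFin \o (fun p => F p.1 - F p.2)); last first.
      by apply/funext => p.
    exact/measurable_EFinP/measurable_funB.
  apply: le_trans (le_abse_integral _ _ mB) _ => //.
  have mD : measurable_fun setT (fun p : ((Rvec R d * R) * (Rvec R d * R))%type =>
      (eucl_dist1 p.1 p.2)%:E).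
    apply/measurable_EFinP; exact: mdist.
  have D0 : forall p : ((Rvec R d * R) * (Rvec R d * R))%type, setT p ->
      (0 <= (eucl_dist1 p.1 p.2)%:E)%E.
    by move=> p _; rewrite lee_fin sqrtr_ge0.
  rewrite -(ge0_integralZl_EFin g measurableT D0 mD (ltW L0)).
  apply: ae_ge0_le_integral => //.
  - exact: measurableT_comp.
  - by move=> p _; rewrite lee_fin mulr_ge0 ?sqrtr_ge0 // ltW.
  - by apply/measurable_EFinP; apply: measurable_funM => //; exact/measurable_EFinP.
  apply: filterS (aeg g cg) => -[[x y] [x' y']] /= [X1 X2] _.
  rewrite -EFinM lee_fin /F /patch ifT; last exact/mem_set.
  rewrite ifT; last exact/mem_set.
  exact: (pw _ _ _ _ _ x x' y y' rho0 hlip X1 X2).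
have Linv : (L%:E * (L^-1)%:E = 1)%E by rewrite -EFinM mulfV // gt_eqF.
have Linv' : ((L^-1)%:E * L%:E = 1)%E by rewrite -EFinM mulVf // gt_eqF.
have Hinf : ((L^-1)%:E * `|eps1 mu Xs h false - eps1 mu Xs h true| <= W1 mu)%E.
  apply: le_ereal_inf_tmp => _ [g cg <-].
  apply: (le_trans (lee_wpmul2l _ (key g cg))).
    by rewrite lee_fin invr_ge0 ltW.
  by rewrite muleA Linv' mul1e.
rewrite -[leLHS]mul1e -Linv -muleA.
by apply: lee_wpmul2l => //; rewrite lee_fin ltW.
Qed.
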